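(* Let $R_1\subset J_1(E)$ be a linear first order system on a vector bundle $E$ of fiber dimension $m$ over an $n$-dimensional base, with coefficients in a differential field $K$, which is involutive and has no zero order equations. Assume the system is written in $\delta$-regular coordinates and solved as in the definition of involution, and that the number $\beta=\beta^n_1$ of equations of class $n$ satisfies $\beta<m$, these equations being solved with respect to $y^1_n,\dots,y^\beta_n$. Then there is a change of unknowns of the form $\bar y^k=y^k-\sum_{l=\beta+1}^m a^k_l(x)\,y^l$ for $1\le k\le\beta$ and $\bar y^l=y^l$ for $\beta<l\le m$ (with $a^k_l\in K$) such that, in the new unknowns: (i) the equations of class $n$ contain $y^{\beta+1},\dots,y^m$ only through $y^l$ and $y^l_i$ with $1\le i\le n-1$ (no jet $y^l_n$, $l>\beta$, appears); (ii) the equations of class $1,\dots,n-1$ contain neither $y^{\beta+1},\dots,y^m$ nor any of their jets.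
   Context: $y^k_i$ denotes the formal first derivative $d_iy^k$. A first order equation solved in a coordinate system is of class $i$ if its leading (principal) jet is of the form $y^k_i$ and it contains no jet $y^l_j$ with $j>i$. Procedure defining classes: solve the maximum number $\beta^n_1$ of equations with respect to jets of class $n$, then the maximum number of remaining equations with respect to jets of class $n-1$, and so on; for an equation of class $i$ the variables $x^1,\dots,x^i$ are multiplicative and $x^{i+1},\dots,x^n$ non-multiplicative. The system is involutive if it is formally integrable and its first prolongation is obtained by prolonging each equation only with respect to its multiplicative variables (coordinates in which this procedure is carried out are called $\delta$-regular). ''No zero order equations'' means the induced projection $R_1\to E$ is onto. *)

(* Defs.v *)
From HB Require Import structures.
From mathcomp Require Import all_boot all_order all_algebra.
Set Implicit Arguments. Unset Strict Implicit. Unset Printing Implicit Defensive.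
Import Order.TTheory GRing.Theory Num.Theory.
Local Open Scope ring_scope.

(* d i = formal d/dx^(i+1) acting on the coefficients.                 *)
Definition is_diff_field (K : fieldType) (n : nat) (d : 'I_n -> K -> K) : Prop :=
  [/\ (forall i x y, d i (x + y) = d i x + d i y),
      (forall i x y, d i (x * y) = d i x * y + x * d i y) &
      (forall i j x, d i (d j x) = d j (d i x))].

Definition mindex (n : nat) := {ffun 'I_n -> nat}.
Definition mi_deg n (mu : mindex n) : nat := (\sum_(i < n) mu i)%N.
Definition mi_zero n : mindex n := [ffun => 0%N].
Definition mi_unit n (j : 'I_n) : mindex n := [ffun i => nat_of_bool (i == j)].
Definition mi_dec n (j : 'I_n) (mu : mindex n) : mindex n :=
  [ffun i => if i == j then (mu i).-1 else mu i].

(* A linear (homogeneous) differential form in the unknowns y^1..y^m :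
   Phi = sum_{k,mu} Phi k mu * y^k_mu, with finitely many nonzero
   coefficients (all considered forms have bounded order).            *)
Definition lform (K : fieldType) (m n : nat) := 'I_m -> mindex n -> K.

Definition form_eq (K : fieldType) (m n : nat) (P Q : lform K m n) : Prop :=
  forall k mu, P k mu = Q k mu.

Definition order_le (K : fieldType) (m n : nat) (q : nat) (P : lform K m n) : Prop :=
  forall k mu, (q < mi_deg mu)%N -> P k mu = 0.

(* Formal derivative d_j of a linear form (prolongation w.r.t. x^j):
   d_j (sum c y^k_mu) = sum (d_j c) y^k_mu + c y^k_(mu + 1_j).        *)
Definition prol (K : fieldType) (m n : nat) (d : 'I_n -> K -> K) (j : 'I_n) (P : lform K m n)
  : lform K m n :=
  fun k mu => d j (P k mu) + (if (0 < mu j)%N then P k (mi_dec j mu) else 0).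

Definition lincomb (K : fieldType) (m n : nat) N (lam : 'I_N -> K) (Phi : 'I_N -> lform K m n)
  : lform K m n :=
  fun k mu => \sum_(t < N) lam t * Phi t k mu.

Definition in_span (K : fieldType) (m n : nat) N (Phi : 'I_N -> lform K m n) (P : lform K m n) : Prop :=
  exists lam : 'I_N -> K, form_eq (lincomb lam Phi) P.

(* A first order system R_1 given by N equations Phi t, equation t     *)
(* being of class (cls t)+1 (0-based index cls t) and solved w.r.t.    *)
(* the leading jet y^(ld t)_(cls t), as in the definition of involution*)
Definition solved_system (K : fieldType) (m n : nat) N (Phi : 'I_N -> lform K m n)
  (cls : 'I_N -> 'I_n) (ld : 'I_N -> 'I_m) : Prop :=
  [/\ (forall t, order_le 1 (Phi t)),
      (forall t, Phi t (ld t) (mi_unit (cls t)) = 1),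
      (forall t k (j : 'I_n), (cls t < j)%N -> Phi t k (mi_unit j) = 0) &
      (forall t s, t != s -> cls s = cls t ->
          Phi s (ld t) (mi_unit (cls t)) = 0)].

(* R_1 -> E onto : no (nonzero) zero order equation in the system *)
Definition no_zero_order (K : fieldType) (m n : nat) N (Phi : 'I_N -> lform K m n) : Prop :=
  forall lam : 'I_N -> K, order_le 0 (lincomb lam Phi) ->
    form_eq (lincomb lam Phi) (fun _ _ => 0).

(* formal integrability: R_2 -> R_1 onto, i.e. every first order
   consequence of the equations and their first prolongations is
   already a combination of the equations.                             *)
Definition formally_integrable (K : fieldType) (m n : nat) N (d : 'I_n -> K -> K)
  (Phi : 'I_N -> lform K m n) : Prop :=
  forall (lam : 'I_N -> K) (nu : 'I_N -> 'I_n -> K),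
    let P := fun k mu => \sum_(t < N)
               (lam t * Phi t k mu + \sum_(j < n) nu t j * prol d j (Phi t) k mu) in
    order_le 1 P -> in_span Phi P.

(* involutive: formally integrable, and the first prolongation is
   spanned by the equations and their prolongations w.r.t.
   multiplicative variables only (x^1..x^(cls+1), i.e. l <= cls).     *)
Definition involutive_system (K : fieldType) (m n : nat) N (d : 'I_n -> K -> K)
  (Phi : 'I_N -> lform K m n) (cls : 'I_N -> 'I_n) : Prop :=
  formally_integrable d Phi /\
  forall (t : 'I_N) (j : 'I_n), (cls t < j)%N ->
    exists (lam : 'I_N -> K) (nu : 'I_N -> 'I_n -> K),
      form_eq (prol d j (Phi t))
        (fun k mu => \sum_(s < N)
           (lam s * Phi s k mu +
            \sum_(l < n | (l <= cls s)%N) nu s l * prol d l (Phi s) k mu)).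

(* Change of unknowns  ybar^k = y^k - sum_{l >= beta} a k l y^l (k < beta),
   ybar^l = y^l (l >= beta): rewriting a first order form in the new
   unknowns (substitute y^k = ybar^k + sum_l a k l y^l).  The result
   gives the coefficient of ybar^k_mu (k < beta) resp. y^l_mu (l >= beta). *)
Definition change_unknowns (K : fieldType) (m n : nat) (d : 'I_n -> K -> K) (beta : nat)
  (a : 'I_m -> 'I_m -> K) (P : lform K m n) : lform K m n :=
  fun l mu =>
    if (beta <= l)%N then
      P l mu + \sum_(k < m | (k < beta)%N) P k mu * a k l
      + (if mu == mi_zero n then
           \sum_(k < m | (k < beta)%N) \sum_(i < n) P k (mi_unit i) * d i (a k l)
         else 0)
    else P l mu.

(* Main.v *)
Require Import Defs.
From HB Require Import structures.
From mathcomp Require Import all_boot all_order all_algebra.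
Import GRing.Theory.
From mathcomp Require Import zify ring.
Set Implicit Arguments.
Local Open Scope ring_scope.
Lemma mi_deg_ge n (mu : mindex n) j : (mu j <= mi_deg mu)%N.
Proof. by rewrite /mi_deg (bigD1 j) //= leq_addr. Qed.

Lemma mi_unit_neq0 n (j : 'I_n) : (mi_unit j == mi_zero n) = false.
Proof.
apply/negbTE/eqP => /(congr1 (fun f : mindex n => f j)).
by rewrite /mi_unit /mi_zero !ffunE eqxx.
Qed.

Lemma mi_dec_unit n (j : 'I_n) : mi_dec j (mi_unit j) = mi_zero n.
Proof. by apply/ffunP => i; rewrite !ffunE; case: (i == j). Qed.

Lemma mi_deg0 n (mu : mindex n) : mi_deg mu = 0%N -> mu = mi_zero n.
Proof.
move=> h; apply/ffunP => i; rewrite ffunE.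
by have := mi_deg_ge mu i; rewrite h leqn0 => /eqP.
Qed.

Lemma mi_deg1 n (mu : mindex n) : mi_deg mu = 1%N -> exists i, mu = mi_unit i.
Proof.
move=> h.
have [i hi] : exists i, (0 < mu i)%N.
  apply/existsP; apply: contraT; rewrite negb_exists => /forallP H.
  move: h; rewrite /mi_deg big1 // => i _.
  by have := H i; rewrite lt0n negbK => /eqP.
exists i.
move: h; rewrite /mi_deg (bigD1 i) //= => h.
set S := (\sum_(j < n | j != i) mu j)%N in h *. have hs : S = 0%N by lia.
have hmi : mu i = 1%N by lia.
apply/ffunP => j; rewrite ffunE.
case: (eqVneq j i) => [->|nji] //=.
move/eqP: hs; rewrite /S sum_nat_eq0 => /forallP /(_ j).
by rewrite nji /= => /eqP.
Qed.
Unset Implicit Arguments.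
Theorem theorem2p10 (K : fieldType) (n m N : nat) (d : 'I_n -> K -> K)
  (Phi : 'I_N -> lform K m n) (cls : 'I_N -> 'I_n) (ld : 'I_N -> 'I_m)
  (beta : nat) :
  [pchar K] =i pred0 ->
  is_diff_field d ->
  solved_system Phi cls ld ->
  no_zero_order Phi ->
  involutive_system d Phi cls ->
  beta = #|[pred t : 'I_N | (cls t : nat) == n.-1]| ->
  (beta < m)%N ->
  (forall t, (cls t : nat) = n.-1 -> (ld t < beta)%N) ->
  exists a : 'I_m -> 'I_m -> K,
    (forall t, (cls t : nat) = n.-1 -> forall l : 'I_m, (beta <= l)%N ->
        change_unknowns d beta a (Phi t) l (mi_unit (cls t)) = 0) /\
    (forall t, (cls t < n.-1)%N -> forall (l : 'I_m) (mu : mindex n), (beta <= l)%N ->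
        change_unknowns d beta a (Phi t) l mu = 0).
Proof.
move=> _ [dD dM _] [ord1 lead1 hi0 solv] _ [_ inv] _ _ ldlt.
case: n d Phi cls ld dD dM inv ord1 lead1 hi0 solv ldlt => [|n] d Phi cls ld dD dM inv ord1 lead1 hi0 solv ldlt.
  by exists (fun _ _ => 0); split => t; case: (cls t).
pose nn : 'I_n.+1 := ord_max.
pose U := mi_unit nn.
have Ceq : forall s, ((cls s : nat) == n.+1.-1) = (cls s == nn).
  by move=> s; rewrite -val_eqE.
have d0 : forall i, d i 0 = 0.
  move=> i; have h := dD i 0 0; rewrite addr0 in h.
  by apply: (addrI (d i 0)); rewrite addr0 -h.
have d1 : forall i, d i 1 = 0.
  move=> i; have h := dM i 1 1; rewrite !mul1r mulr1 in h.
  by apply: (addrI (d i 1)); rewrite addr0 -h.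
have dN : forall i x, d i (- x) = - d i x.
  move=> i x; apply/eqP; rewrite -subr_eq0 opprK -dD.
  by rewrite addNr d0.
have dS : forall i (I : finType) (P : pred I) (F : I -> K),
    d i (\sum_(j | P j) F j) = \sum_(j | P j) d i (F j).
  by move=> i I P F; apply: big_morph; [exact: dD | exact: d0].
pose a : 'I_m -> 'I_m -> K :=
  fun k l => - \sum_(s | (cls s == nn) && (ld s == k)) Phi s l U.
have reidx : forall (f : 'I_m -> K) (g : 'I_N -> K),
    \sum_(k < m | (k < beta)%N) f k * (- \sum_(s | (cls s == nn) && (ld s == k)) g s)
    = - \sum_(s | cls s == nn) f (ld s) * g s.
  move=> f g.
  rewrite (partition_big ld (fun k : 'I_m => (k < beta)%N)); last first.
    by move=> s /eqP hs; apply: ldlt; rewrite hs.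
  rewrite -sumrN; apply: eq_bigr => k _.
  rewrite mulrN mulr_sumr; congr (- _); apply: eq_bigr => s /andP [_ /eqP <-] //.
have lead1' : forall s s', cls s == nn -> cls s' == nn ->
    Phi s (ld s') U = (s == s')%:R.
  move=> s s' /eqP hs /eqP hs'.
  case: (eqVneq s s') => [<-|nss]; first by rewrite /U -hs lead1.
  by rewrite /U -hs' solv ?(negbTE nss) 1?eq_sym // hs hs'.

have sum_sel : forall (j c : 'I_n.+1) (F : 'I_n.+1 -> K),
    \sum_(l < n.+1 | (l <= c)%N) (if l == j then F l else 0)
    = if (j <= c)%N then F j else 0.
  move=> j c F; case: ifP => hjc.
    rewrite (bigD1 j) //= eqxx big1 ?addr0 // => l /andP [_ /negbTE ->] //.
  apply: big1 => l hl; case: eqP => // elj; move: hl; by rewrite elj hjc.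
have leqnn' : forall l : 'I_n.+1, (l <= nn)%N by move=> l; rewrite /= -ltnS.
have hnn : forall c : 'I_n.+1, (nn <= c)%N = (c == nn).
  by move=> c; rewrite -val_eqE /= eqn_leq leq_ord.
exists a; split.
  move=> t /eqP; rewrite Ceq => Ct l hl.
  rewrite /change_unknowns hl mi_unit_neq0 addr0 (eqP Ct) -/U /a reidx.
  rewrite (bigD1 t) //= big1 ?addr0.
    by rewrite lead1' // eqxx mul1r subrr.
  move=> s /andP [Cs nst]; rewrite lead1' // eq_sym (negbTE nst) mul0r //.
move=> t ht l mu hl.
have ht' : (cls t < nn)%N by [].
have [lam [nu H]] := inv t nn ht'.
have PU : forall k, Phi t k U = 0 by move=> k; exact: hi0.
have ordz : forall s k (mu : mindex n.+1), (1 < mi_deg mu)%N -> Phi s k mu = 0.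
  by move=> s k mu' h; apply: ord1.
pose D2 : mindex n.+1 := [ffun j => ((j == nn) * 2)%N].
have D2deg : (1 < mi_deg D2)%N.
  by apply: leq_trans (mi_deg_ge D2 nn); rewrite ffunE eqxx.
have D2dec : mi_dec nn D2 = U.
  by apply/ffunP => j; rewrite !ffunE; case: eqP.
have hA : forall k, \sum_(s | cls s == nn) nu s nn * Phi s k U = 0.
  move=> k; have := H k D2.
  rewrite /prol ordz // d0 ffunE eqxx /= D2dec PU add0r => E.
  rewrite [RHS]E big_mkcond /=; apply: eq_bigr => s _.
  rewrite (ordz s k D2) // mulr0 add0r.
  rewrite (eq_bigr (fun l => if l == nn then nu s l * Phi s k U else 0)).
    by rewrite sum_sel hnn.
  move=> j _; rewrite d0 add0r ffunE.
  by case: eqP => [->|_] //=; rewrite ?D2dec ?mulr0.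
have nuA : forall s, cls s == nn -> nu s nn = 0.
  move=> s Cs; have := hA (ld s).
  rewrite (bigD1 s) //= big1 ?addr0.
    by rewrite lead1' // eqxx mulr1.
  by move=> s' /andP [Cs' ns]; rewrite lead1' // (negbTE ns) mulr0.

have hB : forall i, i != nn -> forall k,
    Phi t k (mi_unit i) = \sum_(s | cls s == nn) nu s i * Phi s k U.
  move=> i ni k.
  pose M : mindex n.+1 := [ffun j => ((j == i) + (j == nn))%N].
  have Mdeg : (1 < mi_deg M)%N.
    have nin : (nn == i) = false by rewrite eq_sym (negbTE ni).
    rewrite /mi_deg (bigD1 i) //= (bigD1 nn) ?ffunE ?eqxx ?(negbTE ni) ?nin /=; try lia.
  have Mdec1 : mi_dec nn M = mi_unit i.
    apply/ffunP => j; rewrite !ffunE; case: (eqVneq j nn) => [->|_] //=.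
      by rewrite addn1.
    by rewrite addn0.
  have Mdec2 : mi_dec i M = U.
    apply/ffunP => j; rewrite !ffunE; case: (eqVneq j i) => [->|_] //=.
  have := H k M.
  rewrite /prol ordz // d0 ffunE eqxx addn1 /= Mdec1 add0r => ->.
  rewrite [RHS]big_mkcond /=; apply: eq_bigr => s _.
  rewrite (ordz s k M) // mulr0 add0r.
  rewrite (eq_bigr (fun l => (if l == i then nu s l * Phi s k U else 0)
                           + (if l == nn then nu s l * Phi s k (mi_unit i) else 0))).
    rewrite big_split /= !sum_sel hnn.
    case: (eqVneq (cls s) nn) => [Cs|nCs].
      by rewrite Cs leq_ord nuA ?Cs // mul0r addr0.
    rewrite addr0; case: ifP => // _; rewrite hi0 ?mulr0 //.
    by rewrite ltn_neqAle leq_ord andbT; apply/negP => /eqP /val_inj /eqP; rewrite (negbTE nCs).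
  move=> j _; rewrite d0 add0r ffunE.
  case: (eqVneq j i) => [->|nji] /=.
    by rewrite (negbTE ni) /= Mdec2 addr0.
  case: (eqVneq j nn) => [->|njn] /=; first by rewrite Mdec1 add0r.
  by rewrite mulr0 addr0.
have nuB : forall s, cls s == nn -> forall i, i != nn -> nu s i = Phi t (ld s) (mi_unit i).
  move=> s Cs i ni; rewrite hB // (bigD1 s) //= big1 ?addr0.
    by rewrite lead1' // eqxx mulr1.
  by move=> s' /andP [Cs' ns]; rewrite lead1' // (negbTE ns) mulr0.
have psiB : forall i k, Phi t k (mi_unit i) =
    \sum_(s | cls s == nn) Phi t (ld s) (mi_unit i) * Phi s k U.
  move=> i k; case: (eqVneq i nn) => [->|ni].
    by rewrite PU big1 // => s _; rewrite PU mul0r.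
  by rewrite hB //; apply: eq_bigr => s Cs; rewrite nuB.

have hC : forall k, Phi t k (mi_zero _) = \sum_(s | cls s == nn)
   (lam s * Phi s k U + \sum_(j < n.+1) Phi t (ld s) (mi_unit j) * d j (Phi s k U)).
  move=> k; have := H k U.
  rewrite /prol PU d0 add0r ffunE eqxx /= mi_dec_unit => ->.
  rewrite [RHS]big_mkcond /=; apply: eq_bigr => s _.
  case: (eqVneq (cls s) nn) => [Cs|nCs].
    congr (_ + _).
    rewrite (eq_bigl (fun _ => true)); last by move=> j; rewrite Cs leq_ord.
    apply: eq_bigr => j _; rewrite ffunE.
    case: (eqVneq j nn) => [->|njn] /=.
      rewrite nuA; last by apply/eqP. have hP := PU (ld s); rewrite /U in hP; by rewrite hP !mul0r.
    by rewrite addr0 nuB //; apply/eqP.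
  have sU : Phi s k U = 0.
    by apply: hi0; rewrite ltn_neqAle leq_ord andbT; apply/negP => /eqP /val_inj /eqP; rewrite (negbTE nCs).
  rewrite sU mulr0 add0r big1 // => j hj; rewrite d0 add0r ffunE.
  case: (eqVneq j nn) => [ejn|] /=; last by rewrite mulr0.
  by move: hj; rewrite ejn hnn (negbTE nCs).
have lamC : forall s, cls s == nn -> lam s = Phi t (ld s) (mi_zero _).
  move=> s Cs; rewrite hC (bigD1 s) //=.
  have -> : \sum_(s' | (cls s' == nn) && (s' != s))
     (lam s' * Phi s' (ld s) U +
      \sum_(j < n.+1) Phi t (ld s') (mi_unit j) * d j (Phi s' (ld s) U)) = 0.
    apply: big1 => s' /andP [Cs' ns]; rewrite lead1' // (negbTE ns) mulr0 add0r.
    apply: big1 => j _; have -> : d j (false%:R) = 0 by exact: d0.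
    by rewrite mulr0.
  rewrite addr0 lead1' // eqxx mulr1 big1 ?addr0 // => j _.
  have -> : d j (true%:R) = 0 by exact: d1.
  by rewrite mulr0.
have psiC : forall k, Phi t k (mi_zero _) = \sum_(s | cls s == nn)
   (Phi t (ld s) (mi_zero _) * Phi s k U
    + \sum_(j < n.+1) Phi t (ld s) (mi_unit j) * d j (Phi s k U)).
  by move=> k; rewrite hC; under eq_bigr => s Cs do rewrite lamC //.
have mi_deg_z : mi_deg (mi_zero n.+1) = 0%N.
  by rewrite /mi_deg big1 // => j _; rewrite ffunE.
have [h0|[h1|h2]] : mi_deg mu = 0%N \/ mi_deg mu = 1%N \/ (1 < mi_deg mu)%N by lia.
- rewrite (mi_deg0 h0) /change_unknowns hl eqxx /a reidx.
  have -> : \sum_(k < m | (k < beta)%N) \sum_(i < n.+1)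
       Phi t k (mi_unit i) * d i (- \sum_(s | (cls s == nn) && (ld s == k)) Phi s l U)
     = - \sum_(s | cls s == nn) \sum_(i < n.+1) Phi t (ld s) (mi_unit i) * d i (Phi s l U).
    rewrite exchange_big /= [in RHS]exchange_big /= -sumrN.
    apply: eq_bigr => i _.
    under eq_bigr => k _ do rewrite dN dS.
    exact: reidx.
  by rewrite psiC big_split /=; ring.
- have [i ->] := mi_deg1 h1.
  by rewrite /change_unknowns hl mi_unit_neq0 addr0 /a reidx -psiB subrr.
- have mu0 : (mu == mi_zero _) = false.
    by apply/negbTE/eqP => e; move: h2; rewrite e mi_deg_z.
  rewrite /change_unknowns hl mu0 addr0 ordz // add0r big1 // => k _.
  by rewrite ordz // mul0r.
Qed.
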